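(* Let $\mathfrak{A}$ be a $(\circ,\wedge,\mathsf{A})$-algebra and $\theta$ a representation of $\mathfrak{A}$ by partial functions. If $\theta$ is meet complete, then $\theta$ is join complete.
   Context: A $(\circ,\wedge,\mathsf{A})$-algebra is a set with two binary operations $\circ,\wedge$ and one unary operation $\mathsf{A}$. An algebra of partial functions of this signature is a set of partial functions, with base $X$ the union of all their domains and ranges, closed under: composition $f\circ g=\{(x,z)\mid \exists y\,(x,y)\in f,(y,z)\in g\}$; intersection; antidomain $\mathsf{A}(f)=\{(x,x)\mid x\in X, x\notin\mathrm{dom}(f)\}$. A representation by partial functions is an isomorphism onto such an algebra. The order on $\mathfrak{A}$ is $a\le b\iff a\wedge b=a$. A representation $\theta$ is meet complete if for every nonempty $S\subseteq\mathfrak{A}$ such that $\bigwedge S$ exists, $\theta(\bigwedge S)=\bigcap\theta[S]$; it is join complete if for every $S\subseteq\mathfrak{A}$ such that $\bigvee S$ exists, $\theta(\bigvee S)=\bigcup\theta[S]$. *)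

(* Defs.v *)
Record CMAAlg := {
  carrier :> Type;
  comp : carrier -> carrier -> carrier;
  meet : carrier -> carrier -> carrier;
  antidom : carrier -> carrier
}.

Definition functional {X : Type} (R : X -> X -> Prop) : Prop :=
  forall x y z, R x y -> R x z -> y = z.

Definition rel_eq {X : Type} (R S : X -> X -> Prop) : Prop :=
  forall x y, R x y <-> S x y.

(** theta : A -> partial functions on the base X is a representation by partial
    functions: each theta a is a partial function, theta is injective, X is the
    union of all domains and ranges, and theta is a homomorphism for
    composition (diagrammatic: first f then g), intersection and antidomain. *)
Definition is_pfun_representation (A : CMAAlg) {X : Type}
  (theta : A -> X -> X -> Prop) : Prop :=
  (forall a, functional (theta a)) /\
  (forall a b, rel_eq (theta a) (theta b) -> a = b) /\
  (forall x : X, exists a, (exists y, theta a x y) \/ (exists y, theta a y x)) /\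
  (forall a b, rel_eq (theta (comp A a b))
                      (fun x z => exists y, theta a x y /\ theta b y z)) /\
  (forall a b, rel_eq (theta (meet A a b))
                      (fun x y => theta a x y /\ theta b x y)) /\
  (forall a, rel_eq (theta (antidom A a))
                    (fun x y => x = y /\ ~ (exists z, theta a x z))).

Definition alg_le (A : CMAAlg) (a b : A) : Prop := meet A a b = a.

Definition is_glb (A : CMAAlg) (S : A -> Prop) (m : A) : Prop :=
  (forall s, S s -> alg_le A m s) /\
  (forall l, (forall s, S s -> alg_le A l s) -> alg_le A l m).

Definition is_lub (A : CMAAlg) (S : A -> Prop) (j : A) : Prop :=
  (forall s, S s -> alg_le A s j) /\
  (forall u, (forall s, S s -> alg_le A s u) -> alg_le A j u).

Definition meet_complete (A : CMAAlg) {X : Type} (theta : A -> X -> X -> Prop)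
  : Prop :=
  forall (S : A -> Prop) (m : A), (exists s, S s) -> is_glb A S m ->
    rel_eq (theta m) (fun x y => forall s, S s -> theta s x y).

Definition join_complete (A : CMAAlg) {X : Type} (theta : A -> X -> X -> Prop)
  : Prop :=
  forall (S : A -> Prop) (j : A), is_lub A S j ->
    rel_eq (theta j) (fun x y => exists s, S s /\ theta s x y).

(* Main.v *)
Require Import Defs.
From Stdlib Require Import Classical.

Lemma le_sub (A : CMAAlg) (X : Type) (theta : A -> X -> X -> Prop) :
  is_pfun_representation A theta ->
  forall a b, alg_le A a b <-> (forall x y, theta a x y -> theta b x y).
Proof.
  intros (Hf & Hi & Hb & Hc & Hm & Ha) a b; split.
  - intros E x y H. unfold alg_le in E. rewrite <- E in H.
    apply (proj1 (Hm a b x y)) in H. tauto.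
  - intros Hs. apply Hi. intros x y; split.
    + intros H. apply (proj1 (Hm a b x y)) in H. tauto.
    + intros H. apply (proj2 (Hm a b x y)). auto.
Qed.

Theorem mainTheorem2 (A : CMAAlg) (X : Type) (theta : A -> X -> X -> Prop) :
  is_pfun_representation A theta ->
  meet_complete A theta -> join_complete A theta.
Proof.
  intros HR MC S j [Hub Hl].
  pose proof (le_sub A X theta HR) as LE.
  destruct HR as (Hf & Hi & Hb & Hc & Hm & Ha).
  assert (Hcomp : forall a x y, theta (comp A (antidom A a) j) x y <->
                   (theta j x y /\ ~ exists z, theta a x z)).
  { intros a x y; split.
    - intros H. apply (proj1 (Hc _ _ x y)) in H. destruct H as [w [H1 H2]].
      apply (proj1 (Ha a x w)) in H1. destruct H1 as [<- H1]. auto.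
    - intros [H1 H2]. apply (proj2 (Hc _ _ x y)). exists x. split; auto.
      apply (proj2 (Ha a x x)). auto. }
  intros x y; split.
  2:{ intros [s [Hs Hsx]]. apply (proj1 (LE s j) (Hub s Hs)). auto. }
  intros Hj. apply NNPP. intros Hno.
  set (m := comp A (antidom A j) j).
  assert (Hm0 : forall p q, ~ theta m p q).
  { intros p q H. apply (proj1 (Hcomp j p q)) in H. destruct H as [H1 H2].
    apply H2. eauto. }
  set (C := fun c => c = j \/ exists s, S s /\ c = comp A (antidom A s) j).
  assert (Hglb : is_glb A C m).
  { split.
    - intros c _. apply LE. intros p q H. exfalso. eapply Hm0; eauto.
    - intros l Hlow. apply LE. intros p q Hlpq. exfalso.
      assert (Hlj : forall u v, theta l u v -> theta j u v).
      { apply LE. apply Hlow. left. reflexivity. }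
      set (l' := comp A (antidom A l) j).
      assert (Hup : alg_le A j l').
      { apply Hl. intros s Hs. apply LE. intros u v Hsuv.
        apply (proj2 (Hcomp l u v)). split.
        - apply (proj1 (LE s j) (Hub s Hs)). auto.
        - intros [z Hz].
          assert (Hc' : theta (comp A (antidom A s) j) u z).
          { apply (proj1 (LE l _) (Hlow _ (or_intror (ex_intro _ s (conj Hs eq_refl))))). auto. }
          apply (proj1 (Hcomp s u z)) in Hc'. destruct Hc' as [_ Hc'].
          apply Hc'. eauto. }
      assert (H' : theta l' p q).
      { apply (proj1 (LE j l') Hup). auto. }
      apply (proj1 (Hcomp l p q)) in H'. destruct H' as [_ H']. apply H'. eauto. }
  assert (Hne : exists c, C c) by (exists j; left; reflexivity).
  pose proof (proj2 (MC C m Hne Hglb x y)) as Hmxy.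
  apply (Hm0 x y). apply Hmxy. intros c [-> | [s [Hs ->]]]; auto.
  apply (proj2 (Hcomp s x y)). split; auto.
  intros [z Hz]. apply Hno. exists s. split; auto.
  assert (y = z).
  { eapply Hf. apply Hj. apply (proj1 (LE s j) (Hub s Hs)). auto. }
  subst. auto.
Qed.
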